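(* Let $M$ be a right $R$-module such that every submodule $N$ of $M$ can be written as $N=X+A$ with $X$ a cyclic submodule of $M$ and $A\ll M$. Then $M$ is principally Goldie*-lifting if and only if $M$ is Goldie*-lifting.
   Context: $R$ is an associative ring with identity; modules are unital right $R$-modules. $K\ll M$ means $K$ is small in $M$. For submodules $X,Y$ of $M$, $X\,\beta^*\,Y$ means $(X+Y)/X\ll M/X$ and $(X+Y)/Y\ll M/Y$. $M$ is Goldie*-lifting if for every submodule $X$ of $M$ there is a direct summand $D$ of $M$ with $X\,\beta^*\,D$; $M$ is principally Goldie*-lifting if this holds for every cyclic submodule $X$. *)

(* Defs.v *)
From HB Require Import structures.
From mathcomp Require Import all_boot all_order all_algebra.
Set Implicit Arguments. Unset Strict Implicit. Unset Printing Implicit Defensive.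
Import GRing.Theory.
Local Open Scope ring_scope.

(* A unital right R-module is modelled as a left module over the converse
   ring [converse R]: for m : M and r : R, the right action m r is [r *: m]. *)

Section ModuleDefs.
Variable R : nzRingType.
Variable M : lmodType R^c.

Definition subm_sub (X Y : M -> Prop) : Prop := forall x, X x -> Y x.
Definition subm_eq (X Y : M -> Prop) : Prop := forall x, X x <-> Y x.
Definition is_whole (X : M -> Prop) : Prop := forall x, X x.
Definition is_zero (X : M -> Prop) : Prop := forall x, X x -> x = 0.

Definition submodule (X : M -> Prop) : Prop :=
  [/\ X 0,
      (forall x y, X x -> X y -> X (x + y)) &
      (forall (r : R^c) x, X x -> X (r *: x))].

Definition subm_add (X Y : M -> Prop) : M -> Prop :=
  fun z => exists x y, [/\ X x, Y y & z = x + y].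

Definition subm_cap (X Y : M -> Prop) : M -> Prop := fun z => X z /\ Y z.

Definition cyclic_sub (X : M -> Prop) : Prop :=
  exists m : M, subm_eq X (fun z => exists r : R^c, z = r *: m).

Definition small (K : M -> Prop) : Prop :=
  submodule K /\
  forall L, submodule L -> is_whole (subm_add K L) -> is_whole L.

(* For submodules X and K of M with X <= K:  K/X << M/X.  Via the
   correspondence between submodules of M/X and submodules of M containing X:
   for every submodule L of M with X <= L, K + L = M implies L = M. *)
Definition small_quot (X K : M -> Prop) : Prop :=
  forall L, submodule L -> subm_sub X L -> is_whole (subm_add K L) -> is_whole L.

Definition beta_star (X Y : M -> Prop) : Prop :=
  small_quot X (subm_add X Y) /\ small_quot Y (subm_add X Y).

Definition direct_summand (D : M -> Prop) : Prop :=
  submodule D /\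
  exists D', [/\ submodule D', is_whole (subm_add D D') & is_zero (subm_cap D D')].

Definition goldie_star_lifting : Prop :=
  forall X, submodule X -> exists D, direct_summand D /\ beta_star X D.

Definition principally_goldie_star_lifting : Prop :=
  forall X, submodule X -> cyclic_sub X -> exists D, direct_summand D /\ beta_star X D.

End ModuleDefs.

(* Main.v *)
Require Import Defs.
From HB Require Import structures.
From mathcomp Require Import all_boot all_order all_algebra.
Import GRing.Theory.
Local Open Scope ring_scope.

Lemma add_submod (R : nzRingType) (M : lmodType R^c) (X Y : M -> Prop) :
  submodule X -> submodule Y -> submodule (subm_add X Y).
Proof.
move=> [X0 XD XZ] [Y0 YD YZ]; split.
- by exists 0, 0; rewrite addr0.
- move=> _ _ [x1 [y1 [h1 h2 ->]]] [x2 [y2 [h3 h4 ->]]].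
  exists (x1 + x2), (y1 + y2); split; [exact: XD|exact: YD|by rewrite addrACA].
- move=> r _ [x [y [h1 h2 ->]]]; exists (r *: x), (r *: y); split;
    [exact: XZ|exact: YZ|by rewrite scalerDr].
Qed.

Theorem proposition3p19 (R : nzRingType) (M : lmodType R^c)
  (hM : forall N : M -> Prop, submodule N ->
          exists X A : M -> Prop,
            [/\ submodule X, cyclic_sub X, small A & subm_eq N (subm_add X A)]) :
  principally_goldie_star_lifting M <-> goldie_star_lifting M.
Proof.
split; last by move=> H X sX _; exact: H.
move=> H N sN.
have [X [A [sX cX [sA smA] eN]]] := hM N sN.
have [D [dD [b1 b2]]] := H X sX cX.
exists D; split => //; split.
- move=> L sL NL wL; apply: b1 => // [x Xx|m].
  + apply: NL; apply/eN; exists x, 0; split => //; [by case: sA|by rewrite addr0].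
  + have [_ [l [[n [d [Nn Dd ->]]] Ll ->]]] := wL m.
    exists (0 + d), (n + l); split.
    * exists 0, d; split => //; by case: sX.
    * by case: sL => _ LD _; apply: LD => //; apply: NL.
    * by rewrite add0r addrCA addrA.
- move=> L sL DL wL.
  have sLA : submodule (subm_add L A) by exact: add_submod.
  have wLA : is_whole (subm_add L A).
    apply: b2 => // [d Dd|m].
    + exists d, 0; split => //; [exact: DL|by case: sA|by rewrite addr0].
    + have [_ [l [[n [d [Nn Dd ->]]] Ll ->]]] := wL m.
      have [x [a [Xx Aa ->]]] := (proj1 (eN n) Nn).
      exists (x + d), (l + a); split.
      * by exists x, d.
      * by exists l, a.
      * by rewrite -!addrA; congr (_ + _); rewrite addrCA [a + _]addrC addrCA.
  apply: smA => // m.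
  have [l [a [Ll Aa ->]]] := wLA m.
  by exists a, l; split => //; rewrite addrC.
Qed.
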